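(* Let $n\ge 5$. Then for every $1\le r\le n$, no subset of $N(W_r)$ of size $n-2$ is a doubly resolving set of $L(n)$.
   Context: For $n\ge 5$, $H(n)$ is the graph with vertex set $V_1\cup V_2$, where $V_1=\{v_1,\dots,v_n\}$ and $V_2=\{v_iv_j: 1\le i<j\le n\}$, and $v_r$ is adjacent to $v_iv_j$ iff $r\in\{i,j\}$ (no other edges). $L(n)$ is the line graph of $H(n)$: its vertices are the edges $\{v_r,v_iv_j\}$ of $H(n)$ (with $r\in\{i,j\}$), two being adjacent iff they share an endpoint. For $1\le r\le n$, $W_r$ is the set of vertices of $L(n)$ of the form $\{v_r,v_iv_j\}$; it is a maximal clique of size $n-1$. $N(W_r)$ denotes the set of vertices of $L(n)$ not in $W_r$ adjacent to some vertex of $W_r$, i.e. $N(W_r)=\{\{v_k,v_iv_j\}: k\neq r,\ \{i,j\}=\{r,k\}\}$. For an ordered set $Q=\{q_1,\dots,q_l\}$ of vertices, $r(x|Q)=(d(x,q_1),\dots,d(x,q_l))$ with $d$ the shortest-path distance; $Q$ is a doubly resolving set of $G$ if for any two distinct vertices $x,y$, $r(x|Q)-r(y|Q)\neq\lambda(1,\dots,1)$ for every integer $\lambda$. *)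

(* Defs.v *)
From mathcomp Require Import all_boot all_order all_algebra.
Set Implicit Arguments. Unset Strict Implicit. Unset Printing Implicit Defensive.

(* If y is unreachable the
   value is #|T| (irrelevant here: L(n) is connected). *)
Definition walkb (T : finType) (e : rel T) (k : nat) (x y : T) : bool :=
  [exists p : k.-tuple T, path e x p && (last x p == y)].

Definition gdist (T : finType) (e : rel T) (x y : T) : nat :=
  find (fun k => walkb e k x y) (iota 0 #|T|).

Definition doubly_resolving (T : finType) (e : rel T) (Q : {set T}) : Prop :=
  forall x y : T, x <> y ->
    ~ (exists lam : int,
         forall q, q \in Q -> ((gdist e x q)%:Z - (gdist e y q)%:Z)%R = lam).

(* Vertices of L(n): edges {v_r, v_i v_j} of H(n), encoded as the pair
   (r, {i,j}) with {i,j} a 2-subset of 'I_n containing r.  Indices are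
   0-based: v_1..v_n become 0..n-1. *)
Definition Lvert (n : nat) :=
  {p : 'I_n * {set 'I_n} | (#|p.2| == 2) && (p.1 \in p.2)}.

(* Two edges of H(n) are adjacent in L(n) iff they are distinct and share an
   endpoint: the same vertex v_r of V_1, or the same vertex v_iv_j of V_2. *)
Definition Ladj (n : nat) : rel (Lvert n) :=
  fun x y => (x != y) && (((val x).1 == (val y).1) || ((val x).2 == (val y).2)).

Definition W (n : nat) (r : 'I_n) : {set Lvert n} :=
  [set x | (val x).1 == r].

Definition NW (n : nat) (r : 'I_n) : {set Lvert n} :=
  [set x | (x \notin W r) && [exists y in W r, Ladj x y]].

(* Main.v *)
Require Import Defs.
From mathcomp Require Import all_boot all_order all_algebra.
From mathcomp Require Import zify.

Section Aux.
Variables (T : finType) (e : rel T).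

Lemma walkb0 (x y : T) : walkb e 0 x y = (x == y).
Proof.
apply/existsP/idP.
- by case=> p; rewrite (tuple0 p) /= ?andTb.
- by move=> h; exists [tuple]; rewrite /= h.
Qed.

Lemma walkbS k (x y : T) :
  walkb e k.+1 x y = [exists z, e x z && walkb e k z y].
Proof.
apply/existsP/existsP.
- case=> p; case: p => [[|z s] //= hs] /andP[/andP[exz ps] ls].
  exists z; rewrite exz /=; apply/existsP; exists (Tuple (hs : size s == k)).
  by rewrite /= ps ls.
- case=> z /andP[exz /existsP[p /andP[pp lp]]].
  by exists [tuple of z :: p]; rewrite /= exz pp.
Qed.

Lemma gdist_eq (x y : T) k : k < #|T| -> walkb e k x y ->
  (forall j, j < k -> ~~ walkb e j x y) -> gdist e x y = k.
Proof.
move=> hk hw hj; rewrite /gdist.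
set P := (fun k0 => walkb e k0 x y).
have hasP : has P (iota 0 #|T|).
  by apply/hasP; exists k => //; rewrite mem_iota.
have hi : find P (iota 0 #|T|) < #|T|.
  by rewrite -[X in _ < X](size_iota 0) -has_find.
have := nth_find 0 hasP; rewrite nth_iota // add0n => hPi.
case: (ltngtP (find P (iota 0 #|T|)) k) => // [lt|gt].
- by move/negP: (hj _ lt).
- by have := before_find 0 gt; rewrite nth_iota // ?add0n /P hw //; apply: ltn_trans hi.
Qed.
End Aux.

Lemma ladjP n (a b : Lvert n) : Ladj a b ->
  ((val a).1 = (val b).1) \/ ((val a).2 = (val b).2).
Proof. by case/andP=> _ /orP[/eqP|/eqP]; [left|right]. Qed.

Lemma vmem n (a : Lvert n) : (val a).1 \in (val a).2.
Proof. by case/andP: (valP a). Qed.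

Lemma vcard n (a : Lvert n) : #|(val a).2| = 2.
Proof. by case/andP: (valP a) => /eqP. Qed.

Theorem lemma3p4 (n : nat) (hn : 5 <= n) (r : 'I_n) (Q : {set Lvert n}) :
  Q \subset NW r -> #|Q| = n - 2 -> ~ doubly_resolving (@Ladj n) Q.
Proof.
move=> hQ hc hdr.
pose g := fun x : Lvert n => (val x).1.
have hlt : #|g @: Q| < #|[set~ r]|.
  rewrite cardsC1 card_ord; apply: (leq_ltn_trans (leq_imset_card _ _)); rewrite hc; lia.
have : ~~ ([set~ r] \subset g @: Q).
  by apply/negP => /subset_leq_card; rewrite leqNgt hlt.
case/subsetPn=> m; rewrite in_setC1 => hmr hmQ.
have hq : forall q, q \in Q -> [/\ (val q).1 != r, (val q).1 != m,
    r \in (val q).2 & (val q).2 = [set r; (val q).1]].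
  move=> q qQ.
  have := subsetP hQ q qQ; rewrite inE => /andP[nW /existsP[y /andP[yW adj]]].
  rewrite inE in nW; rewrite inE in yW.
  have hrq : r \in (val q).2.
    case/ladjP: adj => h.
    - by move: nW; rewrite h (eqP yW) eqxx.
    - by rewrite h -(eqP yW) vmem.
  split => //.
  - apply/negP => /eqP hm; move: hmQ; rewrite -hm.
    by move/negP; apply; apply: imset_f.
  - apply/eqP; rewrite eq_sym eqEcard; apply/andP; split.
    + by apply/subsetP => z; rewrite !inE => /orP[/eqP->|/eqP->] //; rewrite vmem.
    + by rewrite vcard cards2 eq_sym nW.
have hxP : (#|[set r; m]| == 2) && (r \in [set r; m]).
  by rewrite cards2 (eq_sym r m) hmr !inE eqxx.
have hyP : (#|[set r; m]| == 2) && (m \in [set r; m]).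
  by rewrite cards2 (eq_sym r m) hmr !inE eqxx orbT.
pose x : Lvert n := exist _ (r, [set r; m]) hxP.
pose y : Lvert n := exist _ (m, [set r; m]) hyP.
have hxQ : x \notin Q.
  by apply/negP => /hq [] /=; rewrite eqxx.
have hT : 3 < #|{: Lvert n}|.
  have : Q \subset [set~ x].
    by apply/subsetP => q qQ; rewrite in_setC1; apply/eqP => e; move: hxQ; rewrite -e qQ.
  move/subset_leq_card; rewrite cardsC1 hc => h.
  rewrite -ltn_predRL; apply: leq_trans _ h; lia.
apply: (hdr x y).
  by move/(congr1 (fun w => (val w).1)) => /= /eqP; rewrite eq_sym (negbTE hmr).
exists (-1)%R => q qQ.
case: (hq q qQ) => hk1 hk2 hrq hq2.
have hmq : m \notin (val q).2.
  by rewrite hq2 !inE negb_or hmr /= eq_sym.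
have hzP : (#|(val q).2| == 2) && (r \in (val q).2) by rewrite vcard eqxx hrq.
pose z : Lvert n := exist _ (r, (val q).2) hzP.
have axz : Ladj x z.
  rewrite /Ladj /= eqxx orTb andbT; apply/eqP.
  move/(congr1 (fun w => (val w).2)) => /= h; move: hmq; rewrite -h !inE eqxx orbT //.
have azq : Ladj z q.
  rewrite /Ladj /= eqxx orbT andbT; apply/eqP.
  by move/(congr1 (fun w => (val w).1)) => /= h; move: hk1; rewrite -h eqxx.
have ayx : Ladj y x.
  rewrite /Ladj /= eqxx orbT andbT; apply/eqP.
  by move/(congr1 (fun w => (val w).1)) => /= h; move: hmr; rewrite h eqxx.
have nxq : ~~ Ladj x q.
  apply/negP => /ladjP [] /= h.
  - by move: hk1; rewrite -h eqxx.
  - by move: hmq; rewrite -h !inE eqxx orbT.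
have nyq : ~~ Ladj y q.
  apply/negP => /ladjP [] /= h.
  - by move: hk2; rewrite -h eqxx.
  - by move: hmq; rewrite -h !inE eqxx orbT.
have d1 : gdist (@Ladj n) x q = 2.
  apply: gdist_eq; first exact: ltnW hT.
    rewrite walkbS; apply/existsP; exists z; rewrite axz /= walkbS.
    by apply/existsP; exists q; rewrite azq walkb0 eqxx.
  case=> [|[|j]] // _.
  - rewrite walkb0; apply/eqP => h; move: hk1; rewrite -h eqxx //.
  - rewrite walkbS; apply/existsP => -[w /andP[a]]; rewrite walkb0 => /eqP hw.
    by move: a; rewrite hw (negbTE nxq).
have d2 : gdist (@Ladj n) y q = 3.
  apply: gdist_eq; first exact: hT.
    rewrite walkbS; apply/existsP; exists x; rewrite ayx /= walkbS.
    apply/existsP; exists z; rewrite axz /= walkbS.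
    by apply/existsP; exists q; rewrite azq walkb0 eqxx.
  case=> [|[|[|j]]] // _.
  - rewrite walkb0; apply/eqP => h; move: hk2; rewrite -h eqxx //.
  - rewrite walkbS; apply/existsP => -[w /andP[a]]; rewrite walkb0 => /eqP hw.
    by move: a; rewrite hw (negbTE nyq).
  - rewrite walkbS; apply/existsP => -[w /andP[a]].
    rewrite walkbS => /existsP[w2 /andP[b]].
    rewrite walkb0 => /eqP hw2; move: b; rewrite hw2 => b.
    case/ladjP: a => /= h1; case/ladjP: b => h2.
    + by move: hk2; rewrite -h2 -h1 eqxx.
    + by move: hmq; rewrite -h2 h1 vmem.
    + have hv : (val q).1 \in [set r; m] by rewrite h1 -h2; exact: vmem.
      by move: hk1 hk2; move: hv; rewrite !inE => /orP[/eqP->|/eqP->]; rewrite eqxx.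
    + by move: hmq; rewrite -h2 -h1 !inE eqxx orbT.
by rewrite d1 d2.
Qed.
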